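(* Let $n,m\ge1$ and $\alpha^1,\dots,\alpha^n,\beta^1,\dots,\beta^m\in\mathrm{ord}$. 1. If $\alpha^i<\alpha^1,\dots,\alpha^n,\beta^1,\dots,\beta^m$ for every $i\in\{1,\dots,n\}$, then $\alpha^i<\beta^1,\dots,\beta^m$ for every $i$. 2. Let $F_1\subseteq_f I_{\alpha^1},\dots,F_n\subseteq_f I_{\alpha^n}$. If $\alpha^i\le\alpha^1_{F_1},\dots,\alpha^n_{F_n},\beta^1,\dots,\beta^m$ for every $i\in\{1,\dots,n\}$, then $\alpha^i\le\beta^1,\dots,\beta^m$ for every $i$.
   Context: Work constructively. Let $\mathfrak F$ be a set of index sets containing $\mathbb N$ and each $\mathbb N_k=\{n\in\mathbb N:n<k\}$ ($k\ge0$), closed (up to isomorphism) under finitely enumerated subsets, sets of finitely enumerated subsets, and disjoint unions indexed by elements of $\mathfrak F$. A finitely enumerated subset of $A$ is one given by a map $\mathbb N_k\to A$; write $F\subseteq_f I$. The set $\mathrm{ord}$ is inductively generated by $\underline 0$ and, for every family $(\alpha_i)_{i\in I}$ with $I\in\mathfrak F$, $\alpha_i\in\mathrm{ord}$, an element $\mathrm S(\alpha_i)_{i\in I}$; for such $\alpha$, $I_\alpha=I$ and $\alpha_i$ are its definitional subordinals; $I_{\underline 0}=\emptyset$. For a finite list $F$ in $I_\alpha$, $\alpha_F$ is the list of the $\alpha_i$, $i\in F$. Relations between an element and a nonempty finite list, by simultaneous induction: $\alpha\le\beta^1,\dots,\beta^m$ means $\alpha_i<\beta^1,\dots,\beta^m$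 for all $i\in I_\alpha$; $\alpha<\beta^1,\dots,\beta^m$ means there exist $F_1\subseteq_f I_{\beta^1},\dots,F_m\subseteq_f I_{\beta^m}$, not all empty, with $\alpha\le\beta^1_{F_1},\dots,\beta^m_{F_m}$ (concatenated list). *)

(* Defs.v *)
From mathcomp Require Import all_boot.
Set Implicit Arguments. Unset Strict Implicit.

Definition iso (A B : Type) : Prop :=
  exists (f : A -> B) (g : B -> A), cancel f g /\ cancel g f.

(* A finitely enumerated subset of A: a map N_k -> A (N_k = 'I_k). *)
Record finenum (A : Type) := FinEnum { fe_size : nat; fe_map : 'I_fe_size -> A }.

(* The set \mathfrak F of index sets: codes [idx] with elements [el i],
   containing N and every N_k, closed up to isomorphism under finitely
   enumerated subsets, sets of finitely enumerated subsets and disjoint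
   unions indexed by elements of \mathfrak F. *)
Record IndexFamily := {
  idx : Type;
  el : idx -> Type;
  has_nat : exists i, iso (el i) nat;
  has_Nk : forall k, exists i, iso (el i) 'I_k;
  cl_finsub : forall (i : idx) (F : finenum (el i)),
      exists j, iso (el j) {x : el i | exists n, @fe_map _ F n = x};
  cl_setfinsub : forall i : idx, exists j, iso (el j) (finenum (el i));
  cl_sigma : forall (i : idx) (J : el i -> idx),
      exists j, iso (el j) {x : el i & el (J x)}
}.

Section Ord.
Variable FF : IndexFamily.

Inductive ord : Type :=
| ordZ : ord
| ordS : forall J : @idx FF, (@el FF J -> ord) -> ord.

Definition ord_idx (a : ord) : Type :=
  match a with ordZ => Empty_set | ordS J _ => @el FF J end.

Definition ord_sub (a : ord) : ord_idx a -> ord :=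
  match a as a0 return ord_idx a0 -> ord with
  | ordZ => fun e => match e with end
  | ordS _ f => f
  end.

Definition ord_subF (a : ord) (F : finenum (ord_idx a)) : seq ord :=
  map (fun n => ord_sub (@fe_map _ F n)) (enum 'I_(fe_size F)).

(* a choice of F_1 ⊆_f I_{b^1}, ..., F_m ⊆_f I_{b^m} for the list bs *)
Fixpoint subchoice (bs : seq ord) : Type :=
  match bs with
  | [::] => unit
  | b :: bs' => (finenum (ord_idx b) * subchoice bs')%type
  end.

Fixpoint subselect (bs : seq ord) : subchoice bs -> seq ord :=
  match bs as bs0 return subchoice bs0 -> seq ord with
  | [::] => fun _ => [::]
  | b :: bs' => fun c => ord_subF c.1 ++ subselect c.2
  end.

Fixpoint subchoice_nonempty (bs : seq ord) : subchoice bs -> Prop :=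
  match bs as bs0 return subchoice bs0 -> Prop with
  | [::] => fun _ => False
  | b :: bs' => fun c => 0 < fe_size c.1 \/ subchoice_nonempty c.2
  end.

(* alpha <= bs  :  alpha_i < bs for all i in I_alpha, where
   alpha_i < bs  :  exists F_1..F_m not all empty with alpha_i <= bs_F *)
Fixpoint ord_le (a : ord) (bs : seq ord) {struct a} : Prop :=
  match a with
  | ordZ => True
  | ordS J f => forall i : @el FF J,
      exists c : subchoice bs, subchoice_nonempty c /\ ord_le (f i) (subselect c)
  end.

Definition ord_lt (a : ord) (bs : seq ord) : Prop :=
  exists c : subchoice bs, subchoice_nonempty c /\ ord_le a (subselect c).

End Ord.

(* Main.v *)
Require Import Defs.
From mathcomp Require Import all_boot.
From Stdlib Require Permutation.
Import Permutation.
Set Implicit Arguments. Unset Strict Implicit.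

Section S.
Variable FF : IndexFamily.
Local Notation O := (ord FF).

Inductive Sel : seq O -> seq O -> Prop :=
| SelN : Sel [::] [::]
| SelC (b : O) L S (xs : seq (ord_idx b)) :
    Sel L S -> Sel (b :: L) (map (@ord_sub FF b) xs ++ S).

Lemma Sel_nil L : Sel L [::].
Proof. elim: L => [|b L IH]; [constructor | exact: (@SelC b L [::] [::] IH)]. Qed.

Lemma Sel_nil_inv S : Sel [::] S -> S = [::].
Proof. by move=> H; inversion H. Qed.

Lemma Sel_cons_inv b L S : Sel (b :: L) S ->
  exists xs S0, Sel L S0 /\ S = map (@ord_sub FF b) xs ++ S0.
Proof.
move=> H; remember (b :: L) as K eqn:HK; case: H HK => // b' L' S' xs H [eb eL].
subst; by exists xs, S'.
Qed.

Lemma Sel_cat L1 L2 S1 S2 : Sel L1 S1 -> Sel L2 S2 -> Sel (L1 ++ L2) (S1 ++ S2).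
Proof. elim => //= b L S xs _ IH H2; rewrite -catA; constructor; exact: IH. Qed.

Lemma Sel_cat_inv L1 L2 S : Sel (L1 ++ L2) S ->
  exists S1 S2, [/\ Sel L1 S1, Sel L2 S2 & S = S1 ++ S2].
Proof.
elim: L1 S => [|b L1 IH] S /= H; first by exists [::], S; split => //; constructor.
have [xs [S0 [H0 ->]]] := Sel_cons_inv H.
have [S1 [S2 [H1 H2 ->]]] := IH _ H0.
exists (map (@ord_sub FF b) xs ++ S1), S2; split => //; last by rewrite catA.
by constructor.
Qed.

Lemma Sel_union L S1 S2 : Sel L S1 -> Sel L S2 ->
  exists S, Sel L S /\ Permutation S (S1 ++ S2).
Proof.
elim: L S1 S2 => [|b L IH] S1 S2 H1 H2.
  by rewrite (Sel_nil_inv H1) (Sel_nil_inv H2); exists [::]; split => //; constructor.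
have [xs1 [U1 [HU1 ->]]] := Sel_cons_inv H1.
have [xs2 [U2 [HU2 ->]]] := Sel_cons_inv H2.
have [U [HU PU]] := IH _ _ HU1 HU2.
exists (map (@ord_sub FF b) (xs1 ++ xs2) ++ U); split; first by constructor.
rewrite map_cat -!catA; apply: Permutation_app_head.
apply: perm_trans (Permutation_app_swap_app _ _ _).
by apply: Permutation_app_head.
Qed.

Lemma Sel_perm L M S : Permutation L M -> Sel L S ->
  exists S', Sel M S' /\ Permutation S S'.
Proof.
move=> P; elim: P S => [|x l l' P IH|x y l|l l' l'' _ IH1 _ IH2] S H.
- by exists S; split.
- have [xs [S0 [H0 ->]]] := Sel_cons_inv H.
  have [S' [H' P']] := IH _ H0.
  exists (map (@ord_sub FF x) xs ++ S'); split; first by constructor.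
  exact: Permutation_app_head.
- have [xs [S0 [H0 ->]]] := Sel_cons_inv H.
  have [ys [S1 [H1 ->]]] := Sel_cons_inv H0.
  exists (map (@ord_sub FF x) ys ++ map (@ord_sub FF y) xs ++ S1); split.
    by do 2 constructor.
  exact: Permutation_app_swap_app.
- have [S1 [H1 P1]] := IH1 _ H.
  have [S2 [H2 P2]] := IH2 _ H1.
  exists S2; split => //; exact: perm_trans P1 P2.
Qed.

Lemma Sel_in L S p : Sel L S -> List.In p S ->
  exists a, List.In a L /\ exists x : ord_idx a, p = ord_sub x.
Proof.
elim => //= b L' S' xs _ IH Hin.
case: (List.in_app_or _ _ _ Hin) => {}Hin.
  have [x [<- _]] := proj1 (List.in_map_iff _ _ _) Hin.
  by exists b; split; [left | exists x].
have [a [Ha Hx]] := IH Hin; by exists a; split; [right|].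
Qed.

Lemma Sel_subselect bs (c : subchoice bs) : Sel bs (subselect c).
Proof.
elim: bs c => [|b bs IH] c /=; first by constructor.
case: c => F c /=; rewrite /ord_subF.
have -> : [seq ord_sub (@fe_map _ F n) | n <- enum 'I_(fe_size F)] =
          map (@ord_sub FF b) (map (@fe_map _ F) (enum 'I_(fe_size F))).
  by rewrite -map_comp.
by constructor.
Qed.

Lemma ne_size (s : seq O) : s <> [::] <-> 0 < size s.
Proof. by case: s. Qed.

Lemma nonempty_iff (bs : seq O) (c : subchoice bs) :
  subchoice_nonempty c <-> subselect c <> [::].
Proof.
elim: bs c => [|b bs IH] c /=; first by split => // H; apply: H.
case: c => F c /=.
have E := IH c; have E2 := ne_size (ord_subF F ++ subselect c); have E3 := ne_size (subselect c).
move: E2; rewrite size_cat /ord_subF size_map size_enum_ord addn_gt0 => E2.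
split.
  move=> H; apply/E2; apply/orP; case: H => H; [by left | right; exact/E3/E].
by move/E2/orP => [H|H]; [left | right; apply/E/E3].
Qed.

Lemma Sel_choice (bs : seq O) S : Sel bs S -> exists c : subchoice bs, subselect c = S.
Proof.
elim => [|b L S0 xs _ [c Hc]]; first by exists tt.
exists (FinEnum (fun n : 'I_(size xs) => tnth (in_tuple xs) n), c) => /=.
rewrite Hc /ord_subF /=.
have -> : [seq ord_sub (tnth (in_tuple xs) n) | n <- enum 'I_(size xs)] =
          map (@ord_sub FF b) (map (tnth (in_tuple xs)) (enum 'I_(size xs))).
  by rewrite -map_comp.
by rewrite map_tnth_enum.
Qed.

Definition lt' (a : O) L := exists S, [/\ Sel L S, S <> [::] & ord_le a S].

Lemma ord_lt_iff (a : O) L : ord_lt a L <-> lt' a L.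
Proof.
split.
  case=> c [nc H]; exists (subselect c); split => //; first exact: Sel_subselect.
  by apply/nonempty_iff.
case=> S [HS nS H]; have [c Hc] := Sel_choice HS; exists c.
by rewrite nonempty_iff Hc.
Qed.

Lemma le_sub (a : O) L : ord_le a L -> forall x : ord_idx a, lt' (ord_sub x) L.
Proof.
case: a => [|J f] /= H x; first by case: x.
by apply/ord_lt_iff; exact: H.
Qed.

Lemma le_of_sub (a : O) L : (forall x : ord_idx a, lt' (ord_sub x) L) -> ord_le a L.
Proof.
case: a => [|J f] //= H i; by apply/ord_lt_iff; exact: (H i).
Qed.

Lemma ord_ind' (P : O -> Prop) :
  (forall a, (forall x : ord_idx a, P (ord_sub x)) -> P a) -> forall a, P a.
Proof.
move=> H; elim => [|J f IH]; apply: H => //; by case.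
Qed.

Lemma perm_nonempty (S S' : seq O) : Permutation S S' -> S <> [::] -> S' <> [::].
Proof. move=> P nS eS; subst; apply: nS; exact: Permutation_nil (Permutation_sym P). Qed.

Lemma le_perm (a : O) : forall L M, ord_le a L -> Permutation L M -> ord_le a M.
Proof.
elim/ord_ind': a => a IH L M H P; apply: le_of_sub => x.
have [S [HS nS HxS]] := le_sub H x.
have [S' [HS' PS]] := Sel_perm P HS.
exists S'; split => //; [exact: perm_nonempty PS nS | exact: IH HxS PS].
Qed.

Lemma le_down (a : O) : forall L S M, ord_le a (L ++ S) -> Sel M S -> ord_le a (L ++ M).
Proof.
elim/ord_ind': a => a IH L S M H HM; apply: le_of_sub => x.
have [T [HT nT HxT]] := le_sub H x.
have [TL [TS [HTL HTS eT]]] := Sel_cat_inv HT.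
exists (TL ++ S); split.
- exact: Sel_cat.
- move=> e; apply: nT; rewrite eT.
  case: TL e {HTL eT HxT} => //= eS.
  by rewrite eS in HTS; rewrite (Sel_nil_inv HTS).
- by rewrite eT in HxT; exact: (IH x TL TS S HxT HTS).
Qed.

Lemma le_weak (a : O) L M : ord_le a L -> ord_le a (L ++ M).
Proof.
move=> H; apply: le_of_sub => x.
have [T [HT nT HxT]] := le_sub H x.
exists T; split => //; have := Sel_cat HT (Sel_nil M); by rewrite cats0.
Qed.

Lemma le_contr (a : O) L M : ord_le a (L ++ M ++ M) -> ord_le a (L ++ M).
Proof.
move=> H; apply: le_of_sub => x.
have [T [HT nT HxT]] := le_sub H x.
have [TL [T2 [HTL HT2 eT]]] := Sel_cat_inv HT.
have [TM1 [TM2 [H1 H2 eT2]]] := Sel_cat_inv HT2.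
subst T T2.
have [U [HU PU]] := Sel_union H1 H2.
have P : Permutation (TL ++ TM1 ++ TM2) (TL ++ U).
  by apply: Permutation_app_head; apply: Permutation_sym.
exists (TL ++ U); split.
- exact: Sel_cat.
- exact: perm_nonempty P nT.
- exact: le_perm HxT P.
Qed.

Lemma le_subst (a : O) : forall L R d N,
  ord_le a (L ++ d :: R) -> ord_le d N -> ord_le a (L ++ N ++ R).
Proof.
elim/ord_ind': a => a IH L R d N H Hd; apply: le_of_sub => x.
have [T [HT nT HxT]] := le_sub H x.
have [TL [T2 [HTL HT2 eT]]] := Sel_cat_inv HT.
have [xs [TR [HTR eT2]]] := Sel_cons_inv HT2.
subst T T2.
have claim : forall (ys : seq (ord_idx d)) SL SR,
    ord_le (ord_sub x) (SL ++ map (@ord_sub FF d) ys ++ SR) ->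
    exists U, [/\ Sel N U, (ys <> [::] -> U <> [::]) &
                  ord_le (ord_sub x) (SL ++ U ++ SR)].
  elim => [|y ys IHy] SL SR Hy.
    by exists [::]; split => //; exact: Sel_nil.
  have [Ty [HTy nTy HyT]] := le_sub Hd y.
  have H1 := IH x SL (map (@ord_sub FF d) ys ++ SR) (ord_sub y) Ty Hy HyT.
  rewrite catA in H1.
  have [U' [HU' _ HU'le]] := IHy _ _ H1.
  have [U [HU PU]] := Sel_union HTy HU'.
  exists U; split => //.
    move=> _; apply: perm_nonempty (Permutation_sym PU) _.
    by move: nTy; clear; case: Ty.
  apply: le_perm HU'le _.
  rewrite -!catA; apply: Permutation_app_head; rewrite catA.
  apply: Permutation_app => //; exact: Permutation_sym.
have [U [HU nU HUle]] := claim xs TL TR HxT.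
exists (TL ++ U ++ TR); split => //.
  apply: Sel_cat => //; exact: Sel_cat.
move=> e; apply: nT.
move: e nU; clear; case: TL => //= e.
case: U e => //= e nU.
case: xs nU => [|y ys] nU //; by have := nU ltac:(done).
Qed.

Lemma le_allle (X : seq O) : forall a B,
  ord_le a (X ++ B) -> (forall x, List.In x X -> ord_le x B) -> ord_le a B.
Proof.
elim: X => [|x X IH] a B H HX //.
have H1 : ord_le a ((X ++ B) ++ x :: [::]).
  apply: le_perm H _; exact: Permutation_cons_append.
have H2 := le_subst H1 (HX x (or_introl erefl)).
rewrite cats0 -catA in H2.
apply: IH (le_contr H2) _ => y Hy; apply: HX; by right.
Qed.

Definition RS (T L : seq O) := Sel L T /\ T <> [::].

Lemma Acc_nil : Acc RS [::].
Proof. by constructor => T [H nT]; case: nT; exact: Sel_nil_inv. Qed.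

Lemma Acc_cat L1 : Acc RS L1 -> forall L2, Acc RS L2 -> Acc RS (L1 ++ L2).
Proof.
elim => {}L1 _ IH1 L2 A2; constructor => T [HT nT].
have [T1 [T2 [H1 H2 eT]]] := Sel_cat_inv HT; subst T; clear HT.
case: T1 H1 nT => [|t T1] H1 nT.
  exact: (Acc_inv A2 (conj H2 nT)).
apply: IH1; first by split.
case: T2 H2 {nT} => [|u T2] H2; first exact: Acc_nil.
apply: (Acc_inv A2); by split.
Qed.

Lemma Acc_single (a : O) : Acc RS [:: a].
Proof.
elim/ord_ind': a => a IH; constructor => T [HT _].
have [xs [S0 [H0 ->]]] := Sel_cons_inv HT.
rewrite (Sel_nil_inv H0) cats0.
elim: xs => [|y ys IHy] /=; first exact: Acc_nil.
exact: (Acc_cat (IH y) IHy).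
Qed.

Lemma Acc_all L : Acc RS L.
Proof.
elim: L => [|a L IH]; first exact: Acc_nil.
exact: (Acc_cat (Acc_single a) IH).
Qed.

Lemma part2 (B : seq O) : forall A P, Sel A P ->
  (forall a, List.In a A -> ord_le a (P ++ B)) -> forall a, List.In a A -> ord_le a B.
Proof.
move=> A; elim: (Acc_all A) => {}A _ IH P HP H.
case: P HP H => [|p0 P0] HP H; first exact: H.
set P := p0 :: P0 in HP H *.
have claim : forall Q, (forall q, List.In q Q -> List.In q P) ->
    exists P', Sel P P' /\ forall q, List.In q Q -> ord_le q (P' ++ B).
  elim => [|q Q IHQ] HQ.
    by exists [::]; split => //; exact: Sel_nil.
  have [P'' [HP'' HQ'']] := IHQ (fun q' h => HQ q' (or_intror h)).
  have [a [Ha [y eq]]] := Sel_in HP (HQ q (or_introl erefl)).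
  have [T [HT _ HqT]] := le_sub (H a Ha) y.
  have [TP [TB [HTP HTB eT]]] := Sel_cat_inv HT; subst T.
  rewrite -eq in HqT.
  have HqB := le_down HqT HTB.
  have [U [HU PU]] := Sel_union HTP HP''.
  exists U; split => // q' [<-|Hq'].
    apply: le_perm (le_weak P'' HqB) _.
    rewrite -catA; apply: perm_trans (Permutation_app_head _ (Permutation_app_comm _ _)) _.
    rewrite List.app_assoc; apply: Permutation_app => //; exact: Permutation_sym.
  apply: le_perm (le_weak TP (HQ'' q' Hq')) _.
  apply: perm_trans (Permutation_app_comm _ _) _.
  rewrite List.app_assoc; apply: Permutation_app => //; exact: Permutation_sym.
have [P' [HP' HP'le]] := claim P (fun q h => h).
have nP : P <> [::] by [].
have Hall := IH P (conj HP nP) P' HP' HP'le.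
move=> a Ha; exact: le_allle (H a Ha) Hall.
Qed.


Lemma perm4 (a b c d : seq O) :
  Permutation ((a ++ b) ++ (c ++ d)) ((a ++ c) ++ (b ++ d)).
Proof.
rewrite -!catA; apply: Permutation_app_head; exact: Permutation_app_swap_app.
Qed.

Lemma part1 (A B : seq O) : A <> [::] ->
  (forall a, List.In a A -> lt' a (A ++ B)) -> forall a, List.In a A -> lt' a B.
Proof.
move=> nA H.
have claim : forall Q, (forall q, List.In q Q -> List.In q A) ->
   exists P Bs, [/\ Sel A P, Sel B Bs, (Q <> [::] -> P ++ Bs <> [::]) &
                    forall q, List.In q Q -> ord_le q (P ++ Bs)].
  elim => [|q Q IHQ] HQ.
    by exists [::], [::]; split => //; exact: Sel_nil.
  have [P'' [Bs'' [HP'' HB'' _ HQ'']]] := IHQ (fun q' h => HQ q' (or_intror h)).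
  have [T [HT nT HqT]] := H q (HQ q (or_introl erefl)).
  have [TA [TB [HTA HTB eT]]] := Sel_cat_inv HT; subst T.
  have [P [HP PP]] := Sel_union HTA HP''.
  have [Bs [HBs PB]] := Sel_union HTB HB''.
  have K : Permutation ((TA ++ TB) ++ (P'' ++ Bs'')) (P ++ Bs).
    apply: perm_trans (perm4 _ _ _ _) _.
    apply: Permutation_app; exact: Permutation_sym.
  exists P, Bs; split => //.
  - move=> _; apply: perm_nonempty K _.
    by move: nT; clear; case: (TA ++ TB).
  - move=> q' [<-|Hq'].
      exact: le_perm (le_weak (P'' ++ Bs'') HqT) K.
    apply: le_perm (le_weak (TA ++ TB) (HQ'' q' Hq')) _.
    exact: perm_trans (Permutation_app_comm _ _) K.
have [P [Bs [HP HBs nPB HA]]] := claim A (fun q h => h).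
have Hall := part2 HP HA.
case: Bs HBs nPB HA Hall => [|b Bs] HBs nPB HA Hall; last first.
  move=> a Ha; exists (b :: Bs); split => //; exact: Hall.
have nP := nPB nA; rewrite cats0 in nP.
move: HP nP; clear -Hall; case: P => [|p P] HP _ //.
have [a' [Ha' [y _]]] := Sel_in HP (or_introl erefl).
have [S [HS nS _]] := le_sub (Hall a' Ha') y.
by case: nS; exact: Sel_nil_inv.
Qed.

Lemma In_nth (A : seq O) i x0 : i < size A -> List.In (nth x0 A i) A.
Proof. elim: A i => [|a A IH] [|i] //= H; [by left | right; exact: IH]. Qed.

Lemma nth_of_In (A : seq O) a x0 : List.In a A -> exists2 i, i < size A & nth x0 A i = a.
Proof.
elim: A => [|b A IH] //= [<-|H]; first by exists 0.
have [i Hi <-] := IH H; by exists i.+1.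
Qed.

End S.

Theorem lemma4p6 (FF : IndexFamily) (alphas betas : seq (ord FF)) :
  0 < size alphas -> 0 < size betas ->
  ((forall i, i < size alphas -> ord_lt (nth (ordZ FF) alphas i) (alphas ++ betas)) ->
     forall i, i < size alphas -> ord_lt (nth (ordZ FF) alphas i) betas)
  /\
  (forall Fs : subchoice alphas,
     (forall i, i < size alphas ->
        ord_le (nth (ordZ FF) alphas i) (subselect Fs ++ betas)) ->
     forall i, i < size alphas -> ord_le (nth (ordZ FF) alphas i) betas).
Proof.
move=> hA _; split.
  move=> H i Hi; apply/ord_lt_iff.
  apply: (part1 (A := alphas)); last exact: In_nth.
    by case: alphas hA {H Hi}.
  move=> a Ha; have [j Hj <-] := nth_of_In (ordZ FF) Ha; apply/ord_lt_iff; exact: H.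
move=> Fs H i Hi.
apply: (part2 (Sel_subselect Fs)); last exact: In_nth.
move=> a Ha; have [j Hj <-] := nth_of_In (ordZ FF) Ha; exact: H.
Qed.
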